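(* Let $\mathcal{S}$ be a state space, let $\mathcal{T}$ be a subset of the set of measurements on $\mathcal{S}$, and let $\mathsf{M}^{(1)},\mathsf{M}^{(2)}$ be measurements on $\mathcal{S}$ with $m_1$ and $m_2$ outcomes respectively, which have a joint measurement belonging to $\mathcal{T}$. Then $$\bar P(\mathsf{M}^{(1)},\mathsf{M}^{(2)})\le\frac12\Big(1+\frac{\lambda_{max}(\mathcal{T})}{m_1m_2}\Big).$$ In particular, if $\lambda_{max}(\mathcal{T})=m_1=m_2=d$, the right-hand side equals $\frac12(1+\frac1d)$.
   Context: General probabilistic theory setting: a state space $\mathcal{S}$ is a compact convex subset of a finite-dimensional real vector space, embedded as a base of a closed generating proper cone in a vector space $V$, with unit effect $u$. Effects are linear functionals $e$ on $V$ with $0\le e\le1$ on $\mathcal{S}$; $\|f\|=\max_{s\in\mathcal{S}}|f(s)|$. A measurement with finite outcome set $\Omega$ is a map $x\mapsto\mathsf{M}_x$ to effects with $\sum_x\mathsf{M}_x=u$; its decoding power is $\lambda_{max}(\mathsf{M})=\sum_x\|\mathsf{M}_x\|$, and for a set $\mathcal{T}$ of measurements $\lambda_{max}(\mathcal{T})=\sup_{\mathsf{M}\in\mathcal{T}}\lambda_{max}(\mathsf{M})$. A joint measurement of $\mathsf{M}^{(1)}$ (outcomes $\Omega_1$) and $\mathsf{M}^{(2)}$ (outcomes $\Omega_2$) is a measurement $\mathsf{J}$ with outcome set $\Omega_1\times\Omega_2$ such that $\sum_{y}\mathsf{J}_{x,y}=\mathsf{M}^{(1)}_x$ and $\sum_x\mathsf{J}_{x,y}=\mathsf{M}^{(2)}_y$.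 The random access test success probability is $\bar P(\mathsf{M}^{(1)},\mathsf{M}^{(2)})=\frac{1}{2m_1m_2}\sum_{x\in\Omega_1,y\in\Omega_2}\|\mathsf{M}^{(1)}_x+\mathsf{M}^{(2)}_y\|$. *)

(* Defs.v *)
From HB Require Import structures.
From mathcomp Require Import all_boot all_order all_algebra.
From mathcomp Require Import all_classical all_reals all_analysis.
Set Implicit Arguments. Unset Strict Implicit. Unset Printing Implicit Defensive.
Import Order.TTheory GRing.Theory Num.Theory.
Import numFieldNormedType.Exports.
Local Open Scope classical_set_scope.
Local Open Scope ring_scope.

(* The ambient finite-dimensional real vector space V is 'rV[R]_n.
   Linear functionals on V are represented by row vectors f : 'rV[R]_n,
   acting by the standard pairing [ev f x] = sum_i f_i x_i. *)
Definition ev (R : realType) (n : nat) (f x : 'rV[R]_n) : R :=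
  \sum_(i < n) f 0 i * x 0 i.

Definition cone_of (R : realType) (n : nat) (S : set 'rV[R]_n) : set 'rV[R]_n :=
  [set v | exists t : R, exists2 s, S s & 0 <= t /\ v = t *: s].

(* S is a state space with unit effect u: S is a nonempty compact convex set,
   which is a base (cut out by the unit effect u, i.e. u = 1 on S) of the cone
   it generates; that cone is closed, generating and proper (pointed). *)
Definition state_space (R : realType) (n : nat) (S : set 'rV[R]_n) (u : 'rV[R]_n)
  : Prop :=
  S !=set0 /\ compact S /\
  (forall x y t, S x -> S y -> 0 <= t <= 1 -> S (t *: x + (1 - t) *: y)) /\
  (forall s, S s -> ev u s = 1) /\
  closed (cone_of S) /\
  (forall v, exists a b, cone_of S a /\ cone_of S b /\ v = a - b) /\
  (forall v, cone_of S v -> cone_of S (- v) -> v = 0).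

(* ||f|| = max_{s in S} |f(s)| (S is compact, so this sup is attained) *)
Definition fnorm (R : realType) (n : nat) (S : set 'rV[R]_n) (f : 'rV[R]_n) : R :=
  sup [set `|ev f s| | s in S].

Definition is_effect (R : realType) (n : nat) (S : set 'rV[R]_n) (e : 'rV[R]_n) :=
  forall s, S s -> 0 <= ev e s <= 1.

Definition is_measurement (R : realType) (n : nat) (S : set 'rV[R]_n)
  (u : 'rV[R]_n) (Omega : finType) (M : Omega -> 'rV[R]_n) : Prop :=
  (forall x, is_effect S (M x)) /\ \sum_(x : Omega) M x = u.

Definition lam_max (R : realType) (n : nat) (S : set 'rV[R]_n)
  (Omega : finType) (M : Omega -> 'rV[R]_n) : R :=
  \sum_(x : Omega) fnorm S (M x).

Definition meas_set (R : realType) (n : nat) :=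
  forall Omega : finType, (Omega -> 'rV[R]_n) -> Prop.

(* lambda_max(T) = sup over M in T (extended real: could a priori be +oo) *)
Definition lam_max_set (R : realType) (n : nat) (S : set 'rV[R]_n)
  (T : meas_set R n) : \bar R :=
  ereal_sup [set r%:E | r in
     [set r | exists Omega : finType, exists (N : Omega -> 'rV[R]_n),
               T Omega N /\ r = lam_max S N]].

Definition is_joint (R : realType) (n : nat) (S : set 'rV[R]_n) (u : 'rV[R]_n)
  (O1 O2 : finType) (M1 : O1 -> 'rV[R]_n) (M2 : O2 -> 'rV[R]_n)
  (J : (O1 * O2)%type -> 'rV[R]_n) : Prop :=
  [/\ is_measurement S u J,
      (forall x, \sum_(y : O2) J (x, y) = M1 x)
    & (forall y, \sum_(x : O1) J (x, y) = M2 y)].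

Definition Pbar (R : realType) (n : nat) (S : set 'rV[R]_n)
  (O1 O2 : finType) (M1 : O1 -> 'rV[R]_n) (M2 : O2 -> 'rV[R]_n) : R :=
  (2 * #|O1|%:R * #|O2|%:R)^-1 *
    \sum_(x : O1) \sum_(y : O2) fnorm S (M1 x + M2 y).

(* Main.v *)
Require Import Defs.
From HB Require Import structures.
From mathcomp Require Import all_boot all_order all_algebra.
From mathcomp Require Import all_classical all_reals all_analysis.
From mathcomp Require Import ring lra.
Set Implicit Arguments. Unset Strict Implicit.
Import Order.TTheory GRing.Theory Num.Theory.
Local Open Scope ring_scope.

Lemma ev_sum (R : realType) (n : nat) (I : finType) (F : I -> 'rV[R]_n) s :
  ev (\sum_k F k) s = \sum_k ev (F k) s.
Proof.
rewrite /ev; under eq_bigr => i _ do rewrite summxE mulr_suml.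
by rewrite exchange_big.
Qed.

Lemma evD (R : realType) (n : nat) (f g s : 'rV[R]_n) :
  ev (f + g) s = ev f s + ev g s.
Proof.
rewrite /ev -big_split; apply: eq_bigr => i _; rewrite mxE mulrDl //.
Qed.

Lemma key_ineq (R : realType) (O1 O2 : finType) (a : O1 -> O2 -> R) x y :
  (forall x y, 0 <= a x y) -> \sum_x' \sum_y' a x' y' = 1 ->
  \sum_y' a x y' + \sum_x' a x' y <= 1 + a x y.
Proof.
move=> a0 a1.
have H1 : \sum_y' a x y' = \sum_x' \sum_y' ((x' == x)%:R * a x' y').
  symmetry; rewrite (bigD1 x) //= [X in _ + X]big1 ?addr0; last first.
    by move=> x' /negbTE Hx; apply: big1 => y' _; rewrite Hx mul0r.
  by apply: eq_bigr => y' _; rewrite eqxx mul1r.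
have H2 : \sum_x' a x' y = \sum_x' \sum_y' ((y' == y)%:R * a x' y').
  apply: eq_bigr => x' _.
  symmetry; rewrite (bigD1 y) //= [X in _ + X]big1 ?addr0; last first.
    by move=> y' /negbTE Hy; rewrite Hy mul0r.
  by rewrite eqxx mul1r.
have H3 : a x y = \sum_x' \sum_y' (((x' == x) && (y' == y))%:R * a x' y').
  symmetry; rewrite (bigD1 x) //= [X in _ + X]big1 ?addr0; last first.
    by move=> x' /negbTE Hx; apply: big1 => y' _; rewrite Hx mul0r.
  rewrite (bigD1 y) //= [X in _ + X]big1 ?addr0; last first.
    by move=> y' /negbTE Hy; rewrite Hy andbF mul0r.
  by rewrite !eqxx mul1r.
rewrite -a1 H1 H2 H3 -!big_split /=; apply: ler_sum => x' _.
rewrite -!big_split /=; apply: ler_sum => y' _.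
have := a0 x' y'.
by case: (x' == x); case: (y' == y) => /=; rewrite ?mul0r ?mul1r; lra.
Qed.

Lemma fnorm_ge (R : realType) (n : nat) (S : set 'rV[R]_n) (f : 'rV[R]_n) B s :
  S s -> (forall t, S t -> `|ev f t| <= B) -> `|ev f s| <= fnorm S f.
Proof.
move=> Ss HB; apply: ub_le_sup; last by exists s.
by exists B => _ [t St <-]; apply: HB.
Qed.

Lemma fnorm_le (R : realType) (n : nat) (S : set 'rV[R]_n) (f : 'rV[R]_n) c :
  (S !=set0)%classic -> (forall s, S s -> `|ev f s| <= c) -> fnorm S f <= c.
Proof.
move=> [s0 Ss0] Hc; apply: ge_sup; first by exists `|ev f s0|, s0.
by move=> _ [t St <-]; apply: Hc.
Qed.

Theorem proposition5 (R : realType) (n : nat) (S : set 'rV[R]_n) (u : 'rV[R]_n)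
  (T : meas_set R n) (O1 O2 : finType)
  (M1 : O1 -> 'rV[R]_n) (M2 : O2 -> 'rV[R]_n) :
  state_space S u ->
  is_measurement S u M1 -> is_measurement S u M2 ->
  (exists J : (O1 * O2)%type -> 'rV[R]_n, is_joint S u M1 M2 J /\ T _ J) ->
  let m1 := #|O1| in let m2 := #|O2| in
  let rhs := ((2^-1)%:E * (1 + lam_max_set S T * ((m1 * m2)%:R^-1)%:E))%E in
  ((Pbar S M1 M2)%:E <= rhs)%E /\
  (forall d : nat, lam_max_set S T = (d%:R)%:E -> m1 = d -> m2 = d ->
     rhs = (2^-1 * (1 + d%:R^-1))%:E).
Proof.
move=> [S0 [_ [_ [Hu _]]]] _ _ [J [[[Jeff Jsum] HJ1 HJ2] TJ]] m1 m2 rhs.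
split; last first.
  move=> d Hd E1 E2; rewrite /rhs Hd E1 E2 -!EFinM; congr EFin.
  have [->|d0] := eqVneq d 0%N; first by rewrite !mul0r invr0.
  rewrite natrM invfM mulrA divff ?mul1r //.
  by rewrite pnatr_eq0.
have Jn1 : forall p t, S t -> `|ev (J p) t| <= 1.
  by move=> p t St; have /andP[h1 h2] := Jeff p t St; rewrite ger0_norm.
have Jn0 : forall p, 0 <= fnorm S (J p).
  move=> p; case: S0 => s0 Ss0.
  exact: le_trans (normr_ge0 _) (fnorm_ge Ss0 (Jn1 p)).
have bound : forall x y, fnorm S (M1 x + M2 y) <= 1 + fnorm S (J (x, y)).
  move=> x y; apply: fnorm_le => // s Ss.
  rewrite evD -HJ1 -HJ2 !ev_sum.
  have a0 : forall x y, 0 <= ev (J (x, y)) s.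
    by move=> x' y'; have /andP[] := Jeff (x', y') s Ss.
  rewrite ger0_norm; last by apply: addr_ge0; apply: sumr_ge0 => *.
  apply: le_trans (@key_ineq R O1 O2 (fun x y => ev (J (x, y)) s) x y a0 _) _.
    rewrite -(Hu s Ss) -Jsum ev_sum pair_bigA /=.
    by apply: eq_bigr => -[].
  rewrite lerD2l.
  exact: le_trans (ler_norm _) (fnorm_ge Ss (Jn1 _)).
set lam := lam_max S J.
have lam0 : 0 <= lam by apply: sumr_ge0 => *.
have lamE : lam = \sum_x \sum_y fnorm S (J (x, y)).
  by rewrite /lam /lam_max pair_bigA /=; apply: eq_bigr => -[].
set k := #|O1|%:R * #|O2|%:R : R.
have Hsum : \sum_x \sum_y fnorm S (M1 x + M2 y) <= k + lam.
  rewrite lamE /k.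
  apply: le_trans (_ : \sum_(x : O1) \sum_(y : O2) (1 + fnorm S (J (x, y))) <= _).
    by apply: ler_sum => x _; apply: ler_sum => y _; apply: bound.
  rewrite (eq_bigr (fun x => #|O2|%:R + \sum_y fnorm S (J (x, y)))); last first.
    by move=> x _; rewrite big_split /= sumr_const.
  rewrite big_split /= sumr_const; apply: lerD => //; rewrite mulrC mulr_natr; exact: lexx.
have Hreal : Pbar S M1 M2 <= 2^-1 * (1 + lam * (m1 * m2)%:R^-1).
  rewrite /Pbar -mulrA natrM -/k.
  have k0 : 0 <= k by rewrite /k mulr_ge0.
  have [->|kn0] := eqVneq k 0.
    rewrite !(mulr0, invr0, mul0r, addr0); lra.
  have kp : 0 < k by rewrite lt_def kn0.
  apply: le_trans (_ : (2 * k)^-1 * (k + lam) <= _).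
    by apply: ler_wpM2l => //; rewrite invr_ge0 mulr_ge0.
  rewrite le_eqVlt; apply/orP; left; apply/eqP.
  rewrite /m1 /m2 -/k; field.
  by rewrite kn0.
apply: le_trans (_ : (2^-1 * (1 + lam * (m1 * m2)%:R^-1))%:E <= _)%E.
  by rewrite lee_fin.
rewrite /rhs EFinM EFinD EFinM.
apply: lee_wpmul2l; first by rewrite lee_fin.
apply: leeD2l; apply: lee_wpmul2r; first by rewrite lee_fin invr_ge0.
apply: ereal_sup_ubound; exists lam => //.
by exists (O1 * O2)%type, J.
Qed.
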